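(* Let $d\ge 1$ and $p\ge 2$ be integers, let $s\ge p$ be an integer, and let $L,M>0$. Let $f:\mathbb{R}^d\to\mathbb{R}$ be a convex function with a minimizer $x^*$. Let $y_c=[v_c;x_c;t_c]\in\mathbb{R}^{2d+1}$ with $t_c\ge 1$, and set $R=1/t_c$. Suppose that on the closed ball $B(x_c,R)=\{x\in\mathbb{R}^d:\|x-x_c\|\le R\}$ the function $f$ is $(s+1)$-times continuously differentiable and satisfies (i) $\|\nabla^{(i)} f(x)\|\le \big[L\,(f(x)-f(x^* ))\big]^{\frac{p-i}{p}}$ for all $x\in B(x_c,R)$ and all $i\in\{1,\dots,p-1\}$, and (ii) $\|\nabla^{(i)} f(x)\|\le M$ for all $x\in B(x_c,R)$ and all $i\in\{p,\dots,s+1\}$. Then for every $y=[v;x;t]\in U_{R,0.2}(y_c)$ and every $i\in\{1,\dots,p\}$, $$\|\nabla^{(i)} f(x)\|\le p\,(M+L+1)\,\frac{\mathcal{E}(y_c)+1}{t_c^{\,p-i}}.$$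
   Context: Norms of derivative tensors $\nabla^{(i)}f(x)$ are operator norms (viewing $\nabla^{(i)}f(x)$ as a multilinear map on $(\mathbb{R}^d)^i$). Points of $\mathbb{R}^{2d+1}$ are written $y=[v;x;t]$ with $v,x\in\mathbb{R}^d$, $t\in\mathbb{R}$. The set $U_{R,0.2}(y_c)=\{[v;x;t]:\|v-v_c\|\le R,\ \|x-x_c\|\le R,\ |t-t_c|\le 0.2\}$. The Lyapunov function is $\mathcal{E}([v;x;t])=\frac{t^2}{4p^2}\|v\|^2+\big\|x+\frac{t}{2p}v-x^*\big\|^2+t^p\,(f(x)-f(x^* ))$. *)

(* Defs.v *)
From HB Require Import structures.
From mathcomp Require Import all_boot all_order all_algebra.
From mathcomp Require Import all_classical all_reals all_analysis.
Set Implicit Arguments. Unset Strict Implicit. Unset Printing Implicit Defensive.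
Import Order.TTheory GRing.Theory Num.Theory.
Import numFieldNormedType.Exports.
Local Open Scope classical_set_scope.
Local Open Scope ring_scope.

Section Defs.
Variables (R : realType) (d : nat).
Notation V := 'rV[R]_d.

Definition edot (x y : V) : R := \sum_(i < d) x 0 i * y 0 i.
Definition enorm (x : V) : R := Num.sqrt (edot x x).

Definition cball_e (c : V) (r : R) : set V := [set x | enorm (x - c) <= r].

Definition convex_fun (f : V -> R) : Prop :=
  forall (x y : V) (l : R), 0 <= l <= 1 ->
    f (l *: x + (1 - l) *: y) <= l * f x + (1 - l) * f y.

(* iterated directional derivative: dirD [:: h1; ...; hk] f x
   = D_{h1} D_{h2} ... D_{hk} f (x) = nabla^(k) f(x)[h1,...,hk] for C^k f *)
Fixpoint dirD (hs : seq V) (f : V -> R) : V -> R :=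
  match hs with
  | [::] => f
  | h :: hs' => fun x => derive (dirD hs' f) x h
  end.

Definition ebasis (j : 'I_d) : V := delta_mx 0 j.

Definition Ck_on (k : nat) (f : V -> R) (U : set V) : Prop :=
  open U /\
  (forall (js : seq 'I_d), (size js < k)%N -> forall (j : 'I_d) (x : V), U x ->
      derivable (dirD (map ebasis js) f) x (ebasis j)) /\
  (forall (js : seq 'I_d), (size js <= k)%N -> forall x : V, U x ->
      (dirD (map ebasis js) f) @ x --> (dirD (map ebasis js) f) x).

(* operator norm of the i-th derivative tensor nabla^(i) f(x), viewed as a
   multilinear map on (R^d)^i with Euclidean norms *)
Definition dnorm (i : nat) (f : V -> R) (x : V) : R :=
  sup [set r | exists hs : seq V, [/\ size hs = i,
        all (fun h => enorm h <= 1) hs & r = `|dirD hs f x|]].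

Definition Uset (r : R) (vc xc : V) (tc : R) (v x : V) (t : R) : Prop :=
  enorm (v - vc) <= r /\ enorm (x - xc) <= r /\ `|t - tc| <= 1 / 5.

Definition lyap (p : nat) (f : V -> R) (xstar : V) (v x : V) (t : R) : R :=
  t ^+ 2 / (4 * p%:R ^+ 2) * enorm v ^+ 2
  + enorm (x + (t / (2 * p%:R)) *: v - xstar) ^+ 2
  + t ^+ p * (f x - f xstar).

End Defs.

(* Main.v *)
Require Import Defs.
From HB Require Import structures.
From mathcomp Require Import all_boot all_order all_algebra.
From mathcomp Require Import all_classical all_reals all_analysis.
From mathcomp Require Import ring lra zify.
Import Order.TTheory GRing.Theory Num.Theory.
Import numFieldNormedType.Exports.
Local Open Scope classical_set_scope.
Local Open Scope ring_scope.
Section S.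
Variables (R : realType).
Lemma mvi (phi : R -> R) (c a K : R) :
  (forall t, `|t| <= `|c| -> derivable phi t 1) ->
  (forall t, `|t| <= `|c| -> `|'D_1 phi t - a| <= K) ->
  `|phi c - phi 0 - a * c| <= K * `|c|.
Proof.
move=> hd hb.
have key : forall lo hi, lo <= hi -> (forall t, lo <= t <= hi -> `|t| <= `|c|) ->
  exists2 xi, `|xi| <= `|c| & phi hi - phi lo = 'D_1 phi xi * (hi - lo).
  move=> lo hi lh hin.
  have hd' : forall x, x \in `]lo, hi[ -> is_derive x 1 phi ('D_1 phi x).
    move=> x xin; apply: derivableP; apply: hd; apply: hin.
    by rewrite !ltW ?(itvP xin).
  have hc : {within `[lo, hi], continuous phi}.
    apply: derivable_within_continuous => x xin; apply: hd; apply: hin.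
    by rewrite ?(itvP xin).
  have [xi xiin eq] := MVT_segment lh hd' hc.
  exists xi => //; apply: hin; by rewrite ?(itvP xiin).
have [c0|c0] := leP 0 c.
  have [xi xib eq] : exists2 xi, `|xi| <= `|c| & phi c - phi 0 = 'D_1 phi xi * (c - 0).
    apply: key => // t /andP[h1 h2]; by rewrite !ger0_norm // (le_trans h1 h2).
  rewrite eq subr0 -mulrBl normrM ler_wpM2r //; exact: hb.
have [xi xib eq] : exists2 xi, `|xi| <= `|c| & phi 0 - phi c = 'D_1 phi xi * (0 - c).
  apply: key; first exact: ltW.
  move=> t /andP[h1 h2]; rewrite !ler0_norm ?(ltW c0) //; by rewrite lerN2.
have -> : phi c - phi 0 - a * c = ('D_1 phi xi - a) * c.
  by rewrite mulrBl -(opprB (phi 0)) eq sub0r mulrN opprK.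
rewrite normrM ler_wpM2r //; exact: hb.
Qed.
Variable (d : nat).
Local Notation V := 'rV[R]_d.
Lemma line_der (g : V -> R) (y v : V) (t0 : R) :
  derivable g (t0 *: v + y) v ->
  derivable (fun t : R => g (t *: v + y)) t0 1 /\
  'D_1 (fun t : R => g (t *: v + y)) t0 = 'D_v g (t0 *: v + y).
Proof.
have E : (fun h : R => h^-1 *: (((fun t : R => g (t *: v + y)) \o shift t0) (h *: 1) - g (t0 *: v + y)))
   = (fun h : R => h^-1 *: ((g \o shift (t0 *: v + y)) (h *: v) - g (t0 *: v + y))).
  apply: funext => h /=. congr (_ *: (g _ - _)).
  by rewrite /shift /= [h *: 1]mulr1 scalerDl addrA.
by rewrite /derivable /derive E.
Qed.

Lemma mxnorm_le (w : V) c : 0 <= c -> (forall j, `|w 0 j| <= c) -> `|w| <= c.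
Proof.
move=> c0 H. have -> : `|w| = mx_norm w by []. rewrite mx_normrE. apply: bigmax_le => //= -[i j] _.
by rewrite (ord1 i).
Qed.
Lemma mxnorm_ge (w : V) j : `|w 0 j| <= `|w|.
Proof.
have -> : `|w| = mx_norm w by []. rewrite mx_normrE. exact: (le_bigmax _ _ (0, j)).
Qed.
Lemma norm_ebasis (j : 'I_d) : `|ebasis R j| <= 1.
Proof.
apply: mxnorm_le => // k; rewrite /ebasis mxE.
by case: (_ && _); rewrite ?normr1 ?normr0.
Qed.
Lemma norm_psum (h : V) (P : pred 'I_d) :
  `|\sum_(i < d | P i) h 0 i *: ebasis R i| <= \sum_(i < d) `|h 0 i|.
Proof.
apply: (le_trans (ler_norm_sum _ _ _)).
rewrite [X in _ <= X](bigID P) /= -[X in X <= _]addr0 lerD //; last by rewrite sumr_ge0.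
apply: ler_sum => i _. rewrite normrZ -[X in _ <= X]mulr1 ler_wpM2l //; exact: norm_ebasis.
Qed.
Lemma CL (g : V -> R) (U : set V) (x h : V) :
  open U -> U x -> (forall y, U y -> forall j, derivable g y (ebasis R j)) ->
  (forall j, (fun y => 'D_(ebasis R j) g y) @ x --> 'D_(ebasis R j) g x) ->
  derivable g x h /\ 'D_h g x = \sum_(j < d) h 0 j * 'D_(ebasis R j) g x.
Proof.
move=> hU xU hder hcont.
set S := \sum_(j < d) _.
suff conv : (fun t : R => t^-1 *: ((g \o shift x) (t *: h) - g x)) @ 0^' --> S.
  split; first by apply/cvg_ex; exists S.
  by rewrite /derive; apply: cvg_lim.
apply/cvgrPdist_le => eps eps0.
pose C := \sum_(j < d) `|h 0 j| + 1.
have C0 : 0 < C by rewrite ltr_pwDr // sumr_ge0.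
pose e' := eps / C.
have e'0 : 0 < e' by rewrite divr_gt0.
have hUn : nbhs x U by move: hU; rewrite openE => /(_ x xU).
have hCn : \forall y \near x, forall j, `|'D_(ebasis R j) g x - 'D_(ebasis R j) g y| <= e'.
  apply: (@filter_forall _ 'I_d (fun j y => `|'D_(ebasis R j) g x - 'D_(ebasis R j) g y| <= e') (nbhs x) _) => j.
  exact: ((cvgrPdist_le _ _).1 (hcont j) e' e'0).
have [del del0 hdel] : exists2 del, 0 < del &
   ball x del `<=` (fun y => U y /\ forall j, `|'D_(ebasis R j) g x - 'D_(ebasis R j) g y| <= e').
  by apply/nbhs_ballP; apply: filterI hUn hCn.
have sm : 0 < del / (2 * C) by rewrite divr_gt0 // mulr_gt0.
near=> t.
have t0 : t != 0 by near: t; exact: nbhs_dnbhs_neq.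
have ts : `|t| < del / (2 * C) by near: t; exact: dnbhs0_lt.
rewrite /=.
pose zf k := x + t *: \sum_(i < d | (i < k)%N) h 0 i *: ebasis R i.
have z0 : zf 0%N = x by rewrite /zf big_pred0 ?scaler0 ?addr0.
have zd : zf d = t *: h + x.
  rewrite /zf addrC; congr (t *: _ + _).
  rewrite [RHS]matrix_sum_delta big_ord1; apply: eq_bigl => i; exact: ltn_ord.
have zS : forall j : 'I_d, zf j.+1 = (t * h 0 j) *: ebasis R j + zf j.
  move=> j; rewrite /zf (bigD1 j) //= scalerDr addrCA -scalerA; congr (_ + (_ + _ *: _)).
  apply: eq_bigl => i; rewrite ltnS ltn_neqAle andbC //.
have tele : g (t *: h + x) - g x = \sum_(j < d) (g (zf j.+1) - g (zf j)).
  by have := telescope_sumr (fun k => g (zf k)) (leq0n d); rewrite big_mkord zd z0 => ->.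
have hsC : \sum_(j < d) `|h 0 j| <= C by rewrite lerDl.
have Hj : forall j : 'I_d, `|g (zf j.+1) - g (zf j) - 'D_(ebasis R j) g x * (t * h 0 j)| <= e' * `|t * h 0 j|.
  move=> j; rewrite zS.
  have inb : forall tau, `|tau| <= `|t * h 0 j| -> ball x del (tau *: ebasis R j + zf j).
    move=> tau ht; rewrite -ball_normE /ball_ /= /zf addrCA opprD addNKr normrN.
    apply: (le_lt_trans (ler_normD _ _)).
    apply: (@le_lt_trans _ _ (`|t| * C + `|t| * C)).
      rewrite normrZ normrZ lerD //.
        rewrite -[X in _ <= X]mulr1; apply: ler_pM => //; last exact: norm_ebasis.
        apply: (le_trans ht); rewrite normrM; apply: ler_wpM2l => //.
        apply: le_trans hsC; rewrite (bigD1 j) //= lerDl; exact: sumr_ge0.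
      apply: ler_wpM2l => //; apply: le_trans hsC; exact: norm_psum.
    have -> : `|t| * C + `|t| * C = `|t| * (2 * C) by ring.
    by rewrite -ltr_pdivlMr ?mulr_gt0.
  have := @mvi (fun tau => g (tau *: ebasis R j + zf j)) (t * h 0 j) ('D_(ebasis R j) g x) e' _ _.
  rewrite /= scale0r add0r; apply.
  - move=> tau ht; exact: (@line_der g (zf j) (ebasis R j) tau (hder _ (hdel _ (inb _ ht)).1 j)).1.
  - move=> tau ht; rewrite (@line_der g (zf j) (ebasis R j) tau (hder _ (hdel _ (inb _ ht)).1 j)).2 distrC.
    exact: (hdel _ (inb _ ht)).2 j.
rewrite tele.
have -> : S - t^-1 *: \sum_(j < d) (g (zf j.+1) - g (zf j)) =
    - (t^-1 * \sum_(j < d) (g (zf j.+1) - g (zf j) - 'D_(ebasis R j) g x * (t * h 0 j))).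
  rewrite [X in _ = - (_ * X)]sumrB mulrBr opprB; congr (_ - _).
  rewrite big_distrr; apply: eq_bigr => j _; by rewrite /= mulrCA mulKf // mulrC.
rewrite (@normrN R) (@normrM R) (@normfV R) ler_pdivrMl ?normr_gt0 //.
apply: (le_trans (ler_norm_sum _ _ _)).
apply: (le_trans (ler_sum _ (fun j _ => Hj j))).
under eq_bigr do rewrite normrM.
rewrite -big_distrr -big_distrr /= mulrCA; apply: ler_wpM2l => //.
rewrite /e' mulrAC ler_pdivrMr //; apply: ler_wpM2l => //; exact: ltW.
Unshelve. all: by end_near.
Qed.
Lemma coord_le_enorm (h : V) j : `|h 0 j| <= enorm h.
Proof.
rewrite /enorm /edot -sqrtr_sqr; apply: ler_wsqrtr.
rewrite (bigD1 j) //= expr2 lerDl; apply: sumr_ge0 => i _; rewrite -expr2; exact: sqr_ge0.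
Qed.
Lemma enormZ (c : R) (w : V) : enorm (c *: w) = `|c| * enorm w.
Proof.
rewrite /enorm /edot.
have -> : \sum_(i < d) (c *: w) 0 i * (c *: w) 0 i = c ^+ 2 * \sum_(i < d) w 0 i * w 0 i.
  rewrite big_distrr; apply: eq_bigr => i _; by rewrite !mxE /= expr2 mulrACA.
by rewrite sqrtrM ?sqr_ge0 // sqrtr_sqr.
Qed.
Lemma enorm0 : enorm (0 : V) = 0.
Proof.
rewrite /enorm /edot big1 ?sqrtr0 // => i _; by rewrite mxE mul0r.
Qed.
Section Rep.
Variables (f : V -> R) (U : set V) (k : nat).
Hypothesis hU : open U.
Hypothesis hder : forall js : seq 'I_d, (size js < k)%N -> forall j y, U y ->
  derivable (dirD (map (@ebasis R d) js) f) y (ebasis R j).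
Hypothesis hcont : forall js : seq 'I_d, (size js <= k)%N -> forall y, U y ->
  dirD (map (@ebasis R d) js) f @ y --> dirD (map (@ebasis R d) js) f y.

Definition pd (js : seq 'I_d) := dirD (map (@ebasis R d) js) f.

Lemma pd_der js y v : (size js < k)%N -> U y ->
  derivable (pd js) y v /\ 'D_v (pd js) y = \sum_(j < d) v 0 j * pd (j :: js) y.
Proof.
move=> hs yU.
have [A B] := @CL (pd js) U y v hU yU (fun z zU j => hder js hs j z zU) (fun j => hcont (j :: js) hs y yU).
by split.
Qed.

Definition valf (l : seq (R * seq 'I_d)) : V -> R :=
  fun y => \sum_(q <- l) q.1 * pd q.2 y.

Lemma valf_der l y v : all (fun q => (size q.2 < k)%N) l -> U y ->
  derivable (valf l) y v /\
  'D_v (valf l) y = \sum_(q <- l) q.1 * \sum_(j < d) v 0 j * pd (j :: q.2) y.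
Proof.
move=> hl yU; elim: l hl => [|q l IH] /=.
  have -> : valf [::] = cst 0 by apply: funext => z; rewrite /valf big_nil.
  by move=> _; rewrite big_nil derive_cst; split => //; exact: derivable_cst.
move=> /andP[hq hl]; have [IH1 IH2] := IH hl.
have [D1 D2] := @pd_der q.2 y v hq yU.
have -> : valf (q :: l) = (q.1 \*: pd q.2) + valf l.
  by apply: funext => z; rewrite /valf big_cons.
split; first by apply: derivableD => //; exact: derivableZ.
rewrite deriveD //; last exact: derivableZ.
by rewrite deriveZ // D2 IH2 big_cons.
Qed.

Definition step (h : V) (l : seq (R * seq 'I_d)) :=
  flatten [seq [seq (q.1 * h 0 j, j :: q.2) | j <- index_enum 'I_d] | q <- l].

Lemma step_val h l y : valf (step h l) y =
  \sum_(q <- l) q.1 * \sum_(j < d) h 0 j * pd (j :: q.2) y.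
Proof.
elim: l => [|q l IH]; first by rewrite /valf /step /= !big_nil.
rewrite /step /= /valf big_cat /= big_cons -IH big_map /=; congr (_ + _).
rewrite big_distrr /=; apply: eq_bigr => j _; by rewrite mulrA.
Qed.

Lemma step_wt h l : \sum_(q <- step h l) `|q.1| =
  (\sum_(q <- l) `|q.1|) * \sum_(j < d) `|h 0 j|.
Proof.
elim: l => [|q l IH]; first by rewrite /step /= !big_nil mul0r.
rewrite big_cons mulrDl -IH /step /= big_cat big_map /=; congr (_ + _).
rewrite big_distrr /=; apply: eq_bigr => j _; by rewrite normrM.
Qed.

Lemma step_all h l n : all (fun q => size q.2 == n) l ->
  all (fun q => size q.2 == n.+1) (step h l).
Proof.
elim: l => [|q l IH] //= /andP[hq hl].
rewrite all_cat IH // andbT all_map; apply/allP => j _ /=; exact: hq.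
Qed.

Lemma rep (hs : seq V) : (size hs <= k)%N -> exists l,
  [/\ all (fun q => size q.2 == size hs) l,
      \sum_(q <- l) `|q.1| <= \prod_(h <- hs) \sum_(j < d) `|h 0 j|
    & forall y, U y -> dirD hs f y = valf l y].
Proof.
elim: hs => [|h hs IH] /=.
  move=> _; exists [:: (1, [::])]; split => //.
    by rewrite big_cons big_nil big_nil normr1 addr0.
  by move=> y _; rewrite /valf big_cons big_nil /= mul1r addr0.
move=> hk; have hk' : (size hs <= k)%N by apply: ltnW.
have [l [l1 l2 l3]] := IH hk'.
exists (step h l); split.
- exact: step_all.
- rewrite step_wt big_cons mulrC; apply: ler_wpM2l; first exact: sumr_ge0.
  exact: l2.
- move=> y yU.
  have nb : nbhs y U by move: hU; rewrite openE => /(_ y yU).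
  rewrite step_val.
  have -> : derive (dirD hs f) y h = 'D_h (valf l) y.
    apply: near_eq_derive; apply: filterS nb => z zU; exact: l3.
  apply: (@valf_der l y h _ yU).2.
  apply/allP => q ql; have /eqP -> := allP l1 q ql; exact: hk.
Qed.
Lemma bound y n : U y -> (n <= k)%N -> exists B, forall hs : seq V, size hs = n ->
  all (fun h => enorm h <= 1) hs -> `|dirD hs f y| <= B.
Proof.
move=> yU nk.
exists (d%:R ^+ n * \sum_(t : n.-tuple 'I_d) `|pd t y|).
move=> hs sz hu. have hsk : (size hs <= k)%N by rewrite sz.
have [l [l1 l2 l3]] := @rep hs hsk.
rewrite l3 // /valf.
set S := \sum_(t : n.-tuple 'I_d) _.
have S0 : 0 <= S by apply: sumr_ge0.
have pdS : forall q, q \in l -> `|pd q.2 y| <= S.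
  move=> q ql; have sq : size q.2 == n by rewrite -sz; exact: (allP l1 q ql).
  rewrite /S (bigD1 (Tuple sq)) //= lerDl; exact: sumr_ge0.
apply: (le_trans (ler_norm_sum _ _ _)).
apply: (@le_trans _ _ (\sum_(q <- l) `|q.1| * S)).
  rewrite big_seq_cond [X in _ <= X]big_seq_cond; apply: ler_sum => q /andP[ql _].
  rewrite normrM; apply: ler_wpM2l => //; exact: pdS.
rewrite -big_distrl /= mulrC [X in _ <= X]mulrC; apply: ler_wpM2l => //.
apply: (le_trans l2).
rewrite -sz; clear -hu. elim: hs hu => [|h hs IH] /=; first by rewrite big_nil expr0.
move=> /andP[hh hu]; rewrite big_cons exprS; apply: ler_pM.
- by apply: sumr_ge0.
- by apply: prodr_ge0 => *; apply: sumr_ge0.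
- apply: (@le_trans _ _ (\sum_(j < d) (1 : R))); last by rewrite sumr_const card_ord.
  apply: ler_sum => j _; exact: (le_trans (coord_le_enorm h j) hh).
- exact: IH.
Qed.

Lemma der_dirD (hs : seq V) y v : (size hs < k)%N -> U y -> derivable (dirD hs f) y v.
Proof.
move=> hk yU; have [l [l1 _ l3]] := @rep hs (ltnW hk).
have nb : nbhs y U by move: hU; rewrite openE => /(_ y yU).
apply: (@near_eq_derivable _ _ _ (valf l)).
  apply: filterS nb => z zU; by rewrite l3.
apply: (@valf_der l y v _ yU).1.
apply/allP => q ql; have /eqP -> := allP l1 q ql; exact: hk.
Qed.
End Rep.

Lemma dnorm_ge (g : V -> R) i y (hs : seq V) :
  (exists B, forall hs : seq V, size hs = i -> all (fun h => enorm h <= 1) hs -> `|dirD hs g y| <= B) ->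
  size hs = i -> all (fun h => enorm h <= 1) hs -> `|dirD hs g y| <= dnorm i g y.
Proof.
move=> [B hB] sz hu; rewrite /dnorm; apply: ub_le_sup.
  exists B => r [hs' [s' a ->]]; exact: hB.
by exists hs.
Qed.

Lemma dnorm_le (g : V -> R) i y C :
  (forall hs : seq V, size hs = i -> all (fun h => enorm h <= 1) hs -> `|dirD hs g y| <= C) ->
  dnorm i g y <= C.
Proof.
move=> hC; rewrite /dnorm; apply: ge_sup.
  exists `|dirD (nseq i (0 : V)) g y|, (nseq i 0); split => //.
    by rewrite size_nseq.
  by rewrite all_nseq enorm0 ler01 orbT.
by move=> r [hs' [s' a ->]]; exact: hC.
Qed.
Lemma taylor (r K : R) m : 0 <= r -> forall psi : nat -> R -> R,
  (forall j t, (j < m)%N -> `|t| <= r -> derivable (psi j) t 1 /\ 'D_1 (psi j) t = psi j.+1 t) ->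
  (forall t, `|t| <= r -> `|psi m t| <= K) ->
  forall t, `|t| <= r -> `|psi 0%N t| <= \sum_(l < m) `|psi l 0| * `|t| ^+ l + K * `|t| ^+ m.
Proof.
move=> r0; elim: m => [|m IH] psi hd hK t ht.
  by rewrite big_ord0 add0r expr0 mulr1; exact: hK.
have IH' := IH (fun j => psi j.+1) (fun j s jm hs => hd j.+1 s jm hs) hK.
pose Bd (s : R) := \sum_(l < m) `|psi l.+1 0| * s ^+ l + K * s ^+ m.
have K0 : 0 <= K by apply: le_trans (hK 0 _) => //; rewrite normr0.
have Bdm : forall s, `|s| <= `|t| -> `|psi 1%N s| <= Bd `|t|.
  move=> s hs; apply: (le_trans (IH' s (le_trans hs ht))); rewrite /Bd lerD //.
    apply: ler_sum => l _; apply: ler_wpM2l => //; apply: lerXn2r => //.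
  apply: ler_wpM2l => //; apply: lerXn2r => //.
have P1 : forall s, `|s| <= `|t| -> derivable (psi 0%N) s 1.
  move=> s hs; exact: (hd 0%N s isT (le_trans hs ht)).1.
have P2 : forall s, `|s| <= `|t| -> `|'D_1 (psi 0%N) s - 0| <= Bd `|t|.
  move=> s hs; rewrite subr0 (hd 0%N s isT (le_trans hs ht)).2; exact: Bdm.
have H := @mvi (psi 0%N) t 0 (Bd `|t|) P1 P2.
rewrite mul0r subr0 in H.
have H2 : `|psi 0%N t| <= `|psi 0%N 0| + Bd `|t| * `|t|.
  have -> : psi 0%N t = psi 0%N 0 + (psi 0%N t - psi 0%N 0) by rewrite addrC subrK.
  by apply: (le_trans (ler_normD _ _)); apply: lerD.
apply: (le_trans H2); rewrite le_eqVlt; apply/orP; left; apply/eqP.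
rewrite big_ord_recl /= expr0 mulr1 /Bd mulrDl big_distrl -addrA; congr (_ + (_ + _)).
  by apply: eq_bigr => i _; rewrite /= /bump leq0n add1n exprSr mulrA.
by rewrite exprSr mulrA.
Qed.
End S.
Section A.
Variable R : realType.
Lemma powR_le1D (A e : R) : 0 <= A -> 0 <= e <= 1 -> A `^ e <= 1 + A.
Proof.
move=> A0 /andP[e0 e1]; have [hA|hA] := leP A 1.
  have [->|An0] := eqVneq A 0.
    rewrite /powR eqxx addr0; by case: (e == 0).
  have Ap : 0 < A by rewrite lt_neqAle eq_sym An0.
  apply: (@le_trans _ _ 1); last by rewrite lerDl.
  have hA' : 0 < A <= 1 by rewrite Ap hA.
  have := @ger_powR _ A hA' 0 e e0; by rewrite powRr0.
apply: (@le_trans _ _ A); last by rewrite lerDr.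
by apply: ler1_powR => //; apply: ltW.
Qed.
Lemma term_bd (tc L g0 E : R) (p i l : nat) : 1 <= tc -> 0 <= L -> 0 <= g0 ->
  tc ^+ p * g0 <= E -> (l + i < p)%N ->
  (L * g0) `^ ((p%:R - (l + i)%:R) / p%:R) * (1 / tc) ^+ l <= (1 + L * E) / tc ^+ (p - i).
Proof.
move=> tc1 L0 g00 hE hlp.
have tc0 : 0 < tc by apply: lt_le_trans tc1.
set e := (p%:R - (l + i)%:R) / p%:R.
have p0 : (0 < p)%N by apply: leq_ltn_trans hlp.
have pR0 : (p%:R : R) != 0 by rewrite pnatr_eq0 -lt0n.
have pe : p%:R * e = (p - i - l)%:R.
  by rewrite /e mulrC divfK // -subnDA [(i + l)%N]addnC natrB // ltnW.
have e01 : 0 <= e <= 1.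
  rewrite /e; apply/andP; split.
    by rewrite divr_ge0 // subr_ge0 ler_nat ltnW.
  by rewrite ler_pdivrMr ?ltr0n // mul1r lerBlDr lerDl.
have tpe : (tc ^+ p) `^ e = tc ^+ (p - i - l).
  by rewrite -powR_mulrn ?ltW // -powRrM pe powR_mulrn // ltW.
have key : (L * g0) `^ e * tc ^+ (p - i - l) <= 1 + L * E.
  have tp0 : 0 <= tc ^+ p by rewrite exprn_ge0 // ltW.
  rewrite -tpe -powRM ?mulr_ge0 //.
  apply: (le_trans (@powR_le1D _ e _ e01)); first by rewrite ?mulr_ge0.
  rewrite lerD // -mulrA; apply: ler_wpM2l => //; by rewrite mulrC.
have tpos : forall n, 0 < tc ^+ n by move=> n; apply: exprn_gt0.
have -> : (1 + L * E) / tc ^+ (p - i) = (1 + L * E) / tc ^+ (p - i - l) * (1 / tc) ^+ l.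
  have ex : tc ^+ (p - i) = tc ^+ (p - i - l) * tc ^+ l.
    by rewrite -exprD subnK //; lia.
  rewrite ex expr_div_n expr1n; field.
  by rewrite !expf_neq0 // gt_eqF.
apply: ler_wpM2r; first by rewrite exprn_ge0 // divr_ge0 // ltW.
by rewrite ler_pdivlMr.
Qed.
Lemma final_bd (M L E tc : R) (p m : nat) : 0 <= M -> 0 <= L -> 0 <= E -> 0 < tc ->
  (m <= p)%N -> (0 < p)%N ->
  m%:R * ((1 + L * E) / tc ^+ m) + M * (1 / tc) ^+ m <= p%:R * (M + L + 1) * (E + 1) / tc ^+ m.
Proof.
move=> M0 L0 E0 tc0 mp p0.
have t0 : 0 < tc ^+ m by apply: exprn_gt0.
have -> : m%:R * ((1 + L * E) / tc ^+ m) + M * (1 / tc) ^+ m = (m%:R * (1 + L * E) + M) / tc ^+ m.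
  rewrite expr_div_n expr1n; field; by rewrite gt_eqF.
apply: ler_wpM2r; first by rewrite invr_ge0 ltW.
have hm : (m%:R : R) <= p%:R by rewrite ler_nat.
have hp : (1 : R) <= p%:R by rewrite ler1n.
have hm0 : (0 : R) <= m%:R by [].
have LE0 : 0 <= L * E by apply: mulr_ge0.
have ME0 : 0 <= M * E by apply: mulr_ge0.
nra.
Qed.
End A.

Lemma nat1 j i p s : (j < p - i)%N -> (i <= p)%N -> (p <= s)%N -> (j + i < s.+1)%N.
Proof. lia. Qed.
Lemma nat2 l i p : (l < p - i)%N -> (i <= p)%N -> (l + i < p)%N.
Proof. lia. Qed.
Lemma nat3 l i p s : (l + i < p)%N -> (p <= s)%N -> (l + i <= s.+1)%N.
Proof. lia. Qed.
Lemma nat4 l i p : (1 <= i)%N -> (l + i < p)%N -> (1 <= l + i <= p.-1)%N.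
Proof. move=> *; apply/andP; split; lia. Qed.
Lemma nat5 p : (2 <= p)%N -> (0 < p)%N.
Proof. lia. Qed.

Theorem mainTheorem1 (R : realType) (d p s : nat) (L M : R)
  (f : 'rV[R]_d -> R) (xstar : 'rV[R]_d)
  (vc xc : 'rV[R]_d) (tc : R) :
  (1 <= d)%N -> (2 <= p)%N -> (p <= s)%N -> 0 < L -> 0 < M ->
  convex_fun f -> (forall x, f xstar <= f x) ->
  1 <= tc ->
  let Rad := 1 / tc in
  (exists U : set 'rV[R]_d, cball_e xc Rad `<=` U /\ Ck_on s.+1 f U) ->
  (forall x, cball_e xc Rad x -> forall i : nat, (1 <= i <= p.-1)%N ->
     dnorm i f x <= (L * (f x - f xstar)) `^ ((p%:R - i%:R) / p%:R)) ->
  (forall x, cball_e xc Rad x -> forall i : nat, (p <= i <= s.+1)%N ->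
     dnorm i f x <= M) ->
  forall (v x : 'rV[R]_d) (t : R), Uset Rad vc xc tc v x t ->
  forall i : nat, (1 <= i <= p)%N ->
    dnorm i f x <= p%:R * (M + L + 1) * (lyap p f xstar vc xc tc + 1) / tc ^+ (p - i).
Proof.
move=> d1 p2 ps L0 M0 cvx fmin tc1 Rad [U [hsub [hU [hder hcont]]]] hi hii v x t
  [hv [hx ht]] i /andP[i1 ip].
have tc0 : 0 < tc by apply: lt_le_trans tc1.
have Rad0 : 0 <= Rad by rewrite /Rad divr_ge0 // ltW.
pose u := tc *: (x - xc).
have hu : enorm u <= 1.
  rewrite /u enormZ ger0_norm; last exact: ltW.
  apply: (le_trans (@ler_wpM2l _ tc (ltW tc0) _ _ hx)).
  by rewrite /Rad mulrCA mulfV ?gt_eqF // mulr1.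
have xeq : x = Rad *: u + xc.
  by rewrite /u scalerA /Rad div1r mulVf ?gt_eqF // scale1r subrK.
have inB : forall sg, `|sg| <= Rad -> cball_e xc Rad (sg *: u + xc).
  move=> sg hsg; rewrite /cball_e /= addrK enormZ; apply: le_trans hsg.
  rewrite -[X in _ <= X]mulr1; exact: ler_wpM2l.
have inU : forall sg, `|sg| <= Rad -> U (sg *: u + xc).
  by move=> sg hsg; apply: hsub; apply: inB.
set E := lyap p f xstar vc xc tc.
have g00 : 0 <= f xc - f xstar by rewrite subr_ge0.
have hEg : tc ^+ p * (f xc - f xstar) <= E.
  rewrite /E /lyap lerDr; apply: addr_ge0; last exact: sqr_ge0.
  apply: mulr_ge0; last exact: sqr_ge0.
  by apply: divr_ge0; [apply: exprn_ge0; apply: ltW | apply: mulr_ge0 => //; apply: exprn_ge0].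
have hE0 : 0 <= E.
  apply: le_trans hEg; apply: mulr_ge0 => //; apply: exprn_ge0; exact: ltW.
apply: dnorm_le => hs hsz hsu.
pose psi (j : nat) (sg : R) := dirD (nseq j u ++ hs) f (sg *: u + xc).
have hd : forall j sg, (j < p - i)%N -> `|sg| <= Rad ->
    derivable (psi j) sg 1 /\ 'D_1 (psi j) sg = psi j.+1 sg.
  move=> j sg jm hsg.
  have dd : derivable (dirD (nseq j u ++ hs) f) (sg *: u + xc) u.
    apply: (@der_dirD R d f U s.+1 hU hder hcont); last exact: inU.
    by rewrite size_cat size_nseq hsz; apply: nat1 jm ip ps.
  have [D1 D2] := @line_der R d (dirD (nseq j u ++ hs) f) xc u sg dd.
  by split.
have hK : forall sg, `|sg| <= Rad -> `|psi (p - i)%N sg| <= M.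
  move=> sg hsg; apply: le_trans (hii _ (inB sg hsg) p _); last by rewrite leqnn /= ltnW // ltnS.
  apply: dnorm_ge.
  - apply: (@bound R d f U s.+1 hU hder hcont _ _ (inU sg hsg)); exact: leqW.
  - by rewrite size_cat size_nseq hsz subnK.
  - by rewrite all_cat all_nseq hu orbT hsu.
have T := @taylor R Rad M (p - i) Rad0 psi hd hK Rad.
have hR0 : `|Rad| <= Rad by rewrite ger0_norm.
have := T hR0.
rewrite /psi /= -xeq (ger0_norm Rad0) => hT.
apply: (le_trans hT).
have hl : forall l : 'I_(p - i), `|psi l 0| * Rad ^+ l <= (1 + L * E) / tc ^+ (p - i).
  move=> l.
  have l0 : `|(0 : R)| <= Rad by rewrite normr0.
  have lp : (l + i < p)%N by apply: nat2 (ltn_ord l) ip.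
  apply: le_trans (@term_bd R tc L (f xc - f xstar) E p i l tc1 (ltW L0) g00 hEg lp).
  apply: ler_wpM2r; first by rewrite exprn_ge0.
  apply: (@le_trans _ _ (dnorm (l + i) f (0 *: u + xc))).
    apply: dnorm_ge.
    - apply: (@bound R d f U s.+1 hU hder hcont _ _ (inU 0 l0)); exact: nat3 lp ps.
    - by rewrite size_cat size_nseq hsz.
    - by rewrite all_cat all_nseq hu orbT hsu.
  have := hi _ (inB 0 l0) (l + i)%N; rewrite scale0r add0r; apply.
  exact: nat4 i1 lp.
apply: (le_trans (lerD (ler_sum _ (fun l _ => hl l)) (lexx _))).
rewrite sumr_const card_ord -[(_ / _) *+ _]mulr_natl.
apply: final_bd => //; [exact: ltW | exact: ltW | exact: leq_subr | exact: nat5 p2].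
Qed.
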